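(* Let $X$ be a real vector space. Then $(X,\tau_c)$ has the Heine–Borel property: every $\tau_c$-closed and $\tau_c$-bounded subset of $X$ is $\tau_c$-compact. Moreover, every $\tau_c$-compact subset of $X$ lies in some finite-dimensional subspace of $X$.
   Context: For $A\subseteq X$, $cor(A):=\{x\in A:\ \forall x'\in X\ \exists \lambda'>0 \text{ with } x+\lambda x'\in A\ \forall\lambda\in[0,\lambda']\}$. The core convex topology $\tau_c$ on $X$ is the topology whose open sets are the unions of families of convex sets $B\subseteq X$ with $cor(B)=B$; it makes $X$ a topological vector space. A set $A$ is $\tau_c$-bounded if for every $\tau_c$-neighborhood $U$ of $0$ there is $s>0$ with $A\subseteq tU$ for all $t>s$. *)

(* Defs.v *)
From HB Require Import structures.
From mathcomp Require Import all_boot all_order all_algebra.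
From mathcomp Require Import all_classical reals.
Set Implicit Arguments. Unset Strict Implicit. Unset Printing Implicit Defensive.
Import Order.TTheory GRing.Theory Num.Theory.
Local Open Scope classical_set_scope.
Local Open Scope ring_scope.

Section CoreTopology.
Variables (R : realType) (X : lmodType R).

Definition cor (A : set X) : set X :=
  [set x | A x /\ forall x' : X, exists2 l' : R, 0 < l' &
     forall l : R, 0 <= l <= l' -> A (x + l *: x')].

Definition convex_set_X (B : set X) : Prop :=
  forall x y, B x -> B y -> forall l : R, 0 <= l <= 1 -> B (l *: x + (1 - l) *: y).

Definition tauc_open (O : set X) : Prop :=
  exists F : set (set X),
    (forall B, F B -> convex_set_X B /\ cor B = B) /\ O = \bigcup_(B in F) B.

Definition tauc_closed (A : set X) : Prop := tauc_open (~` A).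

Definition tauc_nbhs0 (U : set X) : Prop :=
  exists O, tauc_open O /\ O 0 /\ O `<=` U.

Definition tauc_bounded (A : set X) : Prop :=
  forall U, tauc_nbhs0 U -> exists2 s : R, 0 < s &
    forall t : R, s < t -> A `<=` [set t *: u | u in U].

Definition tauc_compact (A : set X) : Prop :=
  forall F : set (set X), (forall U, F U -> tauc_open U) ->
    A `<=` \bigcup_(U in F) U ->
    exists G : set (set X), [/\ G `<=` F, finite_set G & A `<=` \bigcup_(U in G) U].

Definition span_seq (s : seq X) : set X :=
  [set x | exists c : 'I_(size s) -> R, x = \sum_(i < size s) c i *: s`_i].

Definition subspace_X (V : set X) : Prop :=
  [/\ V 0, forall x y, V x -> V y -> V (x + y) & forall (a : R) x, V x -> V (a *: x)].

Definition fin_dim_subspace (V : set X) : Prop :=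
  subspace_X V /\ exists s : seq X, V = span_seq s.

End CoreTopology.

(* Main.v *)
Require Import Defs.
From HB Require Import structures.
From mathcomp Require Import all_boot all_order all_algebra.
From mathcomp Require Import all_classical reals.
From mathcomp Require Import all_reals all_analysis.
From mathcomp Require Import lra finmap.
Set Implicit Arguments. Unset Strict Implicit. Unset Printing Implicit Defensive.
Import Order.TTheory GRing.Theory Num.Theory.
Import numFieldNormedType.Exports.
Local Open Scope classical_set_scope.
Local Open Scope ring_scope.

Section Alg.
Variables (R : realType) (X : lmodType R).

Lemma tc_span_sub (s : seq X) : subspace_X (span_seq s).
Proof.
split.
- exists (fun _ => 0); rewrite big1 // => i _; exact: scale0r.
- move=> x y [c ->] [d ->]; exists (fun i => c i + d i).
  by rewrite -big_split /=; apply: eq_bigr => i _; rewrite scalerDl.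
- move=> a x [c ->]; exists (fun i => a * c i).
  by rewrite scaler_sumr; apply: eq_bigr => i _; rewrite scalerA.
Qed.

Lemma tc_span_cons_sub (x : X) s : span_seq s `<=` span_seq (x :: s).
Proof.
move=> y [c ->]; exists (fun i : 'I_(size s).+1 =>
  if unlift ord0 i is Some j then c j else 0).
rewrite big_ord_recl unlift_none scale0r add0r; apply: eq_bigr => i _.
by rewrite liftK lift0.
Qed.

Lemma tc_span_cons_x (x : X) s : span_seq (x :: s) x.
Proof.
exists (fun i : 'I_(size s).+1 => if i == ord0 then 1 else 0).
rewrite big_ord_recl eqxx scale1r big1 ?addr0 // => i _.
by rewrite eq_sym (negbTE (neq_lift _ _)) scale0r.
Qed.

Lemma tc_span_cons_dec (x : X) s a : span_seq (x :: s) a ->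
  exists c w, span_seq s w /\ a = c *: x + w.
Proof.
move=> [c ->]; rewrite big_ord_recl /=.
exists (c ord0), (\sum_(i < size s) c (lift ord0 i) *: s`_i); split => //.
exists (fun i => c (lift ord0 i)); apply: eq_bigr => i _; by rewrite ?lift0.
Qed.

Lemma tc_span_nil a : span_seq ([::] : seq X) a -> a = 0.
Proof. by move=> [c ->]; rewrite big_ord0. Qed.

Lemma tc_sub_sum (V : set X) : subspace_X V -> forall x y, V x -> V y -> V (x - y).
Proof. by move=> [V0 VD VZ] x y Vx Vy; apply: VD => //; rewrite -scaleN1r; apply: VZ. Qed.

End Alg.

Section Graph.
Variables (R : realType) (X : lmodType R).
Implicit Types G : set (X * R).

Definition gsub G := [/\ G (0,0),
  (forall p q, G p -> G q -> G (p.1 + q.1, p.2 + q.2)) &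
  (forall a p, G p -> G (a *: p.1, a * p.2))].
Definition fgr G := gsub G /\ (forall a, G (0, a) -> a = 0).
Definition gdom G (x : X) := exists a, G (x, a).
Definition gext G (x0 : X) (v : R) : set (X * R) :=
  [set p | exists q t, G q /\ p = (q.1 + t *: x0, q.2 + t * v)].
Definition linf (f : X -> R) :=
  (forall x y, f (x + y) = f x + f y) /\ (forall a x, f (a *: x) = a * f x).

Lemma lin0 f : linf f -> f 0 = 0.
Proof. by move=> [_ fZ]; rewrite -(scale0r 0) fZ mul0r. Qed.

Lemma linB f : linf f -> forall x y, f (x - y) = f x - f y.
Proof. by move=> [fD fZ] x y; rewrite fD -scaleN1r fZ mulN1r. Qed.

Lemma fgraph_uniq G x a b : fgr G -> G (x, a) -> G (x, b) -> a = b.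
Proof.
move=> [[G0 GD GZ] Gf] Ga Gb.
have := GD _ _ Ga (GZ (-1) _ Gb); rewrite /= scaleN1r subrr mulN1r => /Gf.
by move/eqP; rewrite subr_eq0 => /eqP.
Qed.

Lemma gext_sub G x0 v : gsub G -> G `<=` gext G x0 v.
Proof.
move=> _ [x a] Gp; exists (x, a), 0; split => //=.
by rewrite scale0r mul0r !addr0.
Qed.

Lemma gext_pt G x0 v : gsub G -> gext G x0 v (x0, v).
Proof.
move=> [G0 _ _]; exists (0, 0), 1; split => //=.
by rewrite scale1r mul1r !add0r.
Qed.

Lemma gext_fgraph G x0 v : fgr G -> ~ gdom G x0 -> fgr (gext G x0 v).
Proof.
move=> [[G0 GD GZ] Gf] ndom; split; first split.
- exact: gext_sub.
- move=> _ _ [q [t [Gq ->]]] [q' [t' [Gq' ->]]] /=.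
  exists (q.1 + q'.1, q.2 + q'.2), (t + t'); split; first exact: GD.
  by rewrite /= scalerDl mulrDl; congr pair; rewrite addrACA.
- move=> a _ [q [t [Gq ->]]] /=; exists (a *: q.1, a * q.2), (a * t); split.
    by case: q Gq => ? ? /GZ.
  by congr pair; rewrite /= ?scalerDr ?scalerA ?mulrDr ?mulrA.
- move=> a [q [t [Gq /= [e1 e2]]]].
  have [t0|tn0] := eqVneq t 0.
    move: e1 e2; rewrite t0 scale0r mul0r !addr0 => e1 e2.
    by apply: Gf; case: q Gq e1 e2 => /= x b Gq e1 e2; rewrite e1 e2.
  exfalso; apply: ndom; exists (- t^-1 * q.2).
  have := GZ (- t^-1) q Gq; congr G; congr pair.
  have -> : x0 = t^-1 *: (t *: x0) by rewrite scalerA mulVf // scale1r.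
  have -> : t *: x0 = - q.1 by apply/eqP; rewrite -addr_eq0 addrC -e1.
  by rewrite scalerN scaleNr.
Qed.

Lemma chain_fgraph (F : set (set (X * R))) :
  (forall G, F G -> forall p, G p -> fgr G) -> total_on F subset ->
  (exists G p, F G /\ G p) -> fgr (\bigcup_(G in F) G).
Proof.
move=> HF tot [G1 [p1 [FG1 G1p]]]; split; first split.
- by exists G1 => //; have [[]] := HF _ FG1 _ G1p.
- move=> p q [G FG Gp] [G' FG' G'q].
  have [[_ GD _] _] := HF _ FG _ Gp; have [[_ G'D _] _] := HF _ FG' _ G'q.
  have [GG'|G'G] := tot _ _ FG FG'.
    by exists G' => //; apply: G'D => //; exact: GG'.
  by exists G => //; apply: GD => //; exact: G'G.
- move=> a p [G FG Gp]; exists G => //.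
  by have [[_ _ GZ] _] := HF _ FG _ Gp; exact: GZ.
- move=> a [G FG Gp]; by have [_ Gf] := HF _ FG _ Gp; exact: Gf.
Qed.


Lemma fgraph_extend G0 : fgr G0 ->
  exists f, linf f /\ forall p, G0 p -> f p.1 = p.2.
Proof.
move=> fG0.
pose P := [set G | G = set0 \/ (fgr G /\ G0 `<=` G)].
have [A [PA Amax]] : exists A, P A /\ forall B, A `<` B -> ~ P B.
  apply: Zorn_bigcup => F FP tot.
  have [[G [p [FG Gp]]]|none] := pselect (exists G p, F G /\ G p).
    right; split.
      apply: chain_fgraph; [|done|by exists G, p] => G' FG' p' G'p'.
      by case: (FP _ FG') => [E|[]//]; move: G'p'; rewrite E.
    case: (FP _ FG) => [E|[_ sub]]; first by move: Gp; rewrite E.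
    by move=> q /sub Gq; exists G.
  left; apply/seteqP; split => // q [G FG Gq]; apply: none; by exists G, q.
have [[G00 _ _] _] := fG0.
have [A0|[fA sub]] := PA.
  exfalso; apply: (Amax G0); last by right; split.
  rewrite A0; split; [exact: sub0set | by move=> /(_ (0,0) G00)].
have dA : forall x, gdom A x.
  move=> x; apply: contrapT => nd.
  have gA : gsub A by case: fA.
  have P1 : P (gext A x 0).
    right; split; first exact: gext_fgraph.
    by apply: subset_trans sub _; apply: gext_sub.
  apply: (Amax (gext A x 0) _ P1); split; first exact: gext_sub.
  move=> sub2; apply: nd; exists 0; apply: sub2; exact: (@gext_pt A x 0 gA).
pose f x := xget 0 (fun a => A (x, a)).
have Af : forall x, A (x, f x) by move=> x; exact: (xgetPex 0 (dA x)).
have [[_ AD AZ] _] := fA.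
exists f; split; first split.
- move=> x y; apply: (fgraph_uniq fA (Af _)).
  by have := AD _ _ (Af x) (Af y).
- move=> a x; apply: (fgraph_uniq fA (Af _)).
  by have := AZ a _ (Af x).
- move=> [x a] /sub Axa /=; exact: (fgraph_uniq fA (Af _) Axa).
Qed.

End Graph.

Section Func.
Variables (R : realType) (X : lmodType R).
Implicit Types G : set (X * R).

Lemma cvx_ineq (l a b c : R) : 0 <= l <= 1 -> `|a| < c -> `|b| < c ->
  l * `|a| + (1 - l) * `|b| < c.
Proof.
move=> /andP[l0 l1] ha hb. have [->|lp] := eqVneq l 0.
  by rewrite mul0r add0r subr0 mul1r.
have lp' : 0 < l by rewrite lt_def lp l0.
nra.
Qed.

Lemma cor_ineq (l l' a b c : R) : 0 <= l <= l' -> 0 < l' -> 0 <= b ->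
  l' * (b + 1) = c - a -> a + l * b < c.
Proof. move=> /andP[l0 l1] h1 h2 h3. nra. Qed.

Lemma lin_open (f : X -> R) c : linf f -> tauc_open [set x | `|f x| < c].
Proof.
move=> [fD fZ]; exists [set [set x | `|f x| < c]]; split; last by rewrite bigcup_set1.
move=> B ->; split.
  move=> x y /= hx hy l /andP[l0 l1]; rewrite fD !fZ.
  have l1' : 0 <= 1 - l by rewrite subr_ge0.
  apply: le_lt_trans (ler_normD _ _) _; rewrite !normrM (ger0_norm l0) (ger0_norm l1').
  by apply: cvx_ineq => //; rewrite l0.
apply/seteqP; split; first by move=> x [].
move=> x /= hx; split => // x'.
have c0 : 0 < c - `|f x| by rewrite subr_gt0.
exists ((c - `|f x|) / (`|f x'| + 1)).
  by apply: divr_gt0 => //; apply: ltr_pwDr.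
move=> l /andP[l0 l1] /=; rewrite fD fZ.
apply: le_lt_trans (ler_normD _ _) _; rewrite normrM (ger0_norm l0).
apply: (@cor_ineq l ((c - `|f x|) / (`|f x'| + 1))) => //.
- by rewrite l0.
- by apply: divr_gt0 => //; apply: ltr_pwDr.
- by rewrite -mulrA mulVf ?mulr1 // gt_eqF // ltr_pwDr.
Qed.

Lemma bounded_lin (A : set X) f : tauc_bounded A -> linf f ->
  exists M, forall a, A a -> `|f a| <= M.
Proof.
move=> bA lf.
have nb : tauc_nbhs0 [set x | `|f x| < 1].
  exists [set x | `|f x| < 1]; split; first exact: lin_open.
  by split => //=; rewrite (lin0 lf) normr0 ltr01.
have [s s0 Hs] := bA _ nb.
exists (s + 1) => a Aa.
have st1 : s < s + 1 by rewrite ltrDl ltr01.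
have [u /= hu <-] := Hs (s + 1) st1 a Aa.
case: lf => _ fZ; rewrite fZ normrM (ger0_norm (ltW (addr_gt0 s0 ltr01))).
rewrite -[leRHS]mulr1; apply: ler_wpM2l; [exact: ltW (addr_gt0 s0 ltr01)| exact: ltW].
Qed.

Definition tpick (A : set X) (s : seq X) := xget 0 [set x | A x /\ ~ span_seq s x].

Fixpoint stq (A : set X) (n : nat) : set (X * R) * seq X :=
  match n with
  | 0 => ([set (0, 0)], [::])
  | k.+1 => let p := stq A k in (gext p.1 (tpick A p.2) k%:R, tpick A p.2 :: p.2)
  end.

Lemma pickP (A : set X) s : ~ A `<=` span_seq s -> A (tpick A s) /\ ~ span_seq s (tpick A s).
Proof.
move=> h; have H : exists x, A x /\ ~ span_seq s x.
  apply: contrapT => H; apply: h => x Ax; apply: contrapT => nx; apply: H; by exists x.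
exact: (xgetPex 0 H).
Qed.

Lemma st_inv (A : set X) : (forall s, ~ A `<=` span_seq s) ->
  forall n, fgr (stq A n).1 /\ gdom (stq A n).1 `<=` span_seq (stq A n).2.
Proof.
move=> hA; elim=> [|n [fG dG]] /=.
  split; last by move=> x [a /= [-> _]]; case: (tc_span_sub ([::] : seq X)).
  split; last by move=> a [].
  split => //.
  - by move=> p q /= -> ->; rewrite /= !addr0.
  - by move=> a p /= ->; rewrite /= scaler0 mulr0.
have [pA pn] := pickP (hA (stq A n).2).
split; first apply: gext_fgraph => //.
  by move=> /dG.
have [S0 SD SZ] := tc_span_sub (tpick A (stq A n).2 :: (stq A n).2).
move=> y [a [q [t [Gq [-> _]]]]]; apply: SD.
  by apply: tc_span_cons_sub; apply: dG; exists q.2; case: q Gq.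
by apply: SZ; apply: tc_span_cons_x.
Qed.

Lemma st_mono (A : set X) : (forall s, ~ A `<=` span_seq s) ->
  forall n m, (n <= m)%N -> (stq A n).1 `<=` (stq A m).1.
Proof.
move=> hA n; elim=> [|m IH]; first by rewrite leqn0 => /eqP ->.
rewrite leq_eqVlt => /orP [/eqP -> //|]; rewrite ltnS => /IH h.
apply: subset_trans h _ => /=; apply: gext_sub.
by have [[]] := st_inv hA m.
Qed.

Lemma unbounded_fun (A : set X) : (forall s, ~ A `<=` span_seq s) ->
  exists f, linf f /\ forall n : nat, exists2 a, A a & f a = n%:R.
Proof.
move=> hA.
have HF : forall G, range (fun n => (stq A n).1) G -> forall p, G p -> fgr G.
  by move=> G [n _ <-] _ _; have [] := st_inv hA n.
have tot : total_on (range (fun n => (stq A n).1)) subset.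
  move=> G G' [n _ <-] [m _ <-]; have [nm|mn] := leqP n m.
    by left; apply: st_mono.
  by right; apply: st_mono => //; exact: ltnW.
have [f [lf Hf]] := fgraph_extend (chain_fgraph HF tot
  (ex_intro _ (stq A 0).1 (ex_intro _ (0, 0) (conj (ex_intro2 _ _ 0 I erefl) erefl)))).
exists f; split => // n.
have [pA _] := pickP (hA (stq A n).2).
exists (tpick A (stq A n).2) => //.
apply: (Hf (tpick A (stq A n).2, n%:R)).
exists (stq A n.+1).1; first by exists n.+1.
by apply: gext_pt; have [[]] := st_inv hA n.
Qed.

Fixpoint AllP (T : Type) (P : T -> Prop) (s : seq T) : Prop :=
  if s is x :: s' then P x /\ AllP P s' else True.

Lemma AllP_map T U (P : U -> Prop) (Q : T -> Prop) (h : T -> U) s :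
  (forall x, Q x -> P (h x)) -> AllP Q s -> AllP P (map h s).
Proof. by move=> hQ; elim: s => //= x s IH [qx qs]; split; [apply: hQ|apply: IH]. Qed.

Lemma decomp (s : seq X) : exists L : seq ((X -> R) * X),
  AllP (fun p => linf p.1) L /\
  forall a, span_seq s a -> a = \sum_(p <- L) p.1 a *: p.2.
Proof.
elim: s => [|x s [L [HL HD]]].
  by exists [::]; split => // a /tc_span_nil ->; rewrite big_nil.
have [S0 SD SZ] := tc_span_sub s.
have [xs|xns] := pselect (span_seq s x).
  exists L; split => // a /tc_span_cons_dec [c [w [sw ->]]]; apply: HD.
  by apply: SD => //; apply: SZ.
pose B : set (X * R) := [set p | span_seq s p.1 /\ p.2 = 0].
have fB : fgr B.
  split; last by move=> a [].
  split => //.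
  - by move=> p q [? ->] [? ->]; split; [exact: SD|rewrite addr0].
  - by move=> a p [? ->]; split; [exact: SZ|rewrite mulr0].
have fG : fgr (gext B x 1) by apply: gext_fgraph => // -[a [/= ? _]].
have [g [lg Hg]] := fgraph_extend fG.
have gx : g x = 1 by apply: (Hg (x, 1)); apply: gext_pt; case: fB.
have gw : forall w, span_seq s w -> g w = 0.
  by move=> w sw; apply: (Hg (w, 0)); apply: gext_sub; [case: fB|].
have [gD gZ] := lg.
exists ((g, x) :: map (fun p => (fun a => p.1 (a - g a *: x), p.2)) L); split.
  split => //; apply: AllP_map HL => -[h u] /= [hD hZ]; split.
    by move=> a b; rewrite -hD gD scalerDl opprD addrACA.
  by move=> c a; rewrite -hZ gZ scalerBr scalerA.
move=> a /tc_span_cons_dec [c [w [sw ->]]].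
rewrite big_cons big_map /=.
have -> : g (c *: x + w) = c by rewrite gD gZ gx gw // mulr1 addr0.
have -> : c *: x + w - c *: x = w by rewrite addrC addKr.
by rewrite -HD.
Qed.

End Func.

Section Topo.
Variables (R : realType) (X : lmodType R).

Lemma avg_in (B : set X) n (z : 'I_n.+1 -> X) : convex_set_X B ->
  (forall i, B (z i)) -> B (n.+1%:R^-1 *: \sum_i z i).
Proof.
elim: n z => [|n IH] z cB Bz.
  by rewrite big_ord1 mulr1n invr1 scale1r.
rewrite big_ord_recr /=.
have hS := IH (fun i => z (widen_ord (leqnSn n.+1) i)) cB (fun i => Bz _).
have l0 : 0 <= n.+1%:R / n.+2%:R :> R by rewrite divr_ge0 ?ler0n.
have l1 : n.+1%:R / n.+2%:R <= 1 :> R.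
  by rewrite ler_pdivrMr ?ltr0n // mul1r ler_nat.
have := cB _ _ hS (Bz ord_max) _ (introT andP (conj l0 l1)).
have e1 : (n.+1%:R / n.+2%:R) * n.+1%:R^-1 = n.+2%:R^-1 :> R.
  by rewrite mulrAC mulfV ?mul1r // pnatr_eq0.
have e2 : 1 - n.+1%:R / n.+2%:R = n.+2%:R^-1 :> R.
  have h2 : n.+2%:R != 0 :> R by rewrite pnatr_eq0.
  apply: (mulIf h2); rewrite mulrBl mulVf // mul1r divfK // -natrB //.
  by rewrite subSnn.
by rewrite scalerA e1 e2 scalerDr.
Qed.

Definition phi m (t : 'I_m -> X) (c : 'rV[R]_m) : X := \sum_i c ord0 i *: t i.

Lemma open_pre m (t : 'I_m.+1 -> X) (B : set X) : convex_set_X B -> cor B = B ->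
  open [set c : 'rV[R]_m.+1 | B (phi t c)].
Proof.
move=> cB corB; rewrite openE => c /= Bc.
rewrite /interior; apply/nbhs_ballP.
set x := phi t c.
have Bc' : cor B x by rewrite corB.
have /choice [lam Hlam] : forall i : 'I_m.+1, exists l : R, 0 < l /\
    forall l0, 0 <= l0 <= l -> B (x + l0 *: t i) /\ B (x + l0 *: - t i).
  move=> i; have [_ H] := Bc'.
  have [l1 l1p H1] := H (t i); have [l2 l2p H2] := H (- t i).
  exists (Num.min l1 l2); split; first by rewrite lt_min l1p l2p.
  move=> l0 /andP[h0]; rewrite le_min => /andP[h1 h2].
  by split; [apply: H1|apply: H2]; rewrite h0.
pose d := \big[Num.min/1]_i lam i.
have dp : 0 < d.
  apply: (big_ind (fun y => 0 < y)) => //.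
    by move=> a b ha hb; rewrite lt_min ha hb.
  by move=> i _; case: (Hlam i).
have dl : forall i, d <= lam i by move=> i; exact: bigmin_le.
have m0 : 0 < m.+1%:R :> R by rewrite ltr0n.
exists (d / m.+1%:R); first by rewrite /= divr_gt0.
move=> y hy /=.
have hyi : forall i, `|c ord0 i - y ord0 i| < d / m.+1%:R.
  by move=> i; case: hy => _ /(_ ord0 i); rewrite -ball_normE.
pose e i := m.+1%:R * (y ord0 i - c ord0 i).
have Bz : forall i, B (x + e i *: t i).
  move=> i; have [_ Hi] := Hlam i.
  have ei : `|e i| <= lam i.
    apply: le_trans (dl i); rewrite /e normrM ger0_norm ?ler0n // distrC.
    by rewrite -ler_pdivlMl // mulrC ltW.
  have [e0|e0] := lerP 0 (e i).
    have h : 0 <= e i <= lam i by rewrite e0 /=; rewrite (ger0_norm e0) in ei.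
    exact: (Hi _ h).1.
  have -> : e i *: t i = (- e i) *: - t i by rewrite scalerN scaleNr opprK.
  have h : 0 <= - e i <= lam i by rewrite oppr_ge0 (ltW e0) /=; rewrite (ltr0_norm e0) in ei.
  exact: (Hi _ h).2.
have := avg_in cB Bz.
rewrite big_split /= (_ : \sum_(i < m.+1) x = m.+1%:R *: x); last by rewrite sumr_const card_ord scaler_nat.
rewrite scalerDr scalerA mulVf ?gt_eqF //.
rewrite scale1r scaler_sumr.
have -> : \sum_i m.+1%:R^-1 *: (e i *: t i) = \sum_i (y ord0 i - c ord0 i) *: t i.
  apply: eq_bigr => i _; rewrite scalerA /e mulrA mulVf ?gt_eqF // mul1r.
  by [].
rewrite /x /phi -big_split /=.
by congr B; apply: eq_bigr => i _; rewrite -scalerDl addrC subrK.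
Qed.

End Topo.

Section Fin.
Variables (R : realType) (X : lmodType R).

Lemma open_pre_tauc m (t : 'I_m.+1 -> X) (U : set X) : tauc_open U ->
  open [set c : 'rV[R]_m.+1 | U (phi t c)].
Proof.
move=> [F [HF ->]].
have -> : [set c : 'rV[R]_m.+1 | (\bigcup_(B in F) B) (phi t c)] =
    \bigcup_(B in F) [set c | B (phi t c)].
  by apply/seteqP; split => c [B FB Bc]; exists B.
apply: bigcup_open => B FB; have [cB cBB] := HF B FB; exact: open_pre.
Qed.

Lemma compact_box m (t : 'I_m.+1 -> X) (M : R) (A : set X) : tauc_closed A ->
  (forall a, A a -> exists c : 'rV[R]_m.+1, (forall i, `|c ord0 i| <= M) /\ a = phi t c) ->
  tauc_compact A.
Proof.
move=> cA hA F Fo AF.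
pose K := [set v : 'rV[R]_m.+1 | forall i, (fun _ : 'I_m.+1 => `[-M, M]%classic : set R) i (v ord0 i)].
have cK : compact K by apply: rV_compact => i; exact: segment_compact.
rewrite compact_cover in cK.
have h1 : forall U, [set U | F U \/ U = ~` A] U -> open [set c | U (phi t c)].
  move=> U [/Fo|->]; apply: open_pre_tauc => //.
have h2 : K `<=` \bigcup_(U in [set U | F U \/ U = ~` A]) [set c | U (phi t c)].
  move=> c Kc; case: (pselect (A (phi t c))) => [Ac|nAc].
    have [U FU Uc] := AF _ Ac; exists U => //; by left.
  by exists (~` A) => //; right.
have [D' D'sub cov] := cK (set X) [set U | F U \/ U = ~` A]
   (fun U => [set c | U (phi t c)]) h1 h2.
exists [set U : set X | U \in D' /\ F U]; split.
- by move=> U [].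
- by apply: sub_finite_set (finite_fset D'); move=> U [].
move=> a Aa; have [c [cb ea]] := hA a Aa.
have Kc : K c by move=> i; rewrite /= in_itv /= -ler_norml.
have [U D'U Uc] := cov c Kc.
have FU : F U.
  have := D'sub U D'U; rewrite in_setE /= => -[//|eU].
  by move: Uc; rewrite eU /= -ea.
by exists U; [rewrite /mkset; split | rewrite ea].
Qed.

Lemma bound_list (A : set X) (L : seq ((X -> R) * X)) d : tauc_bounded A ->
  AllP (fun p => linf p.1) L ->
  exists M, forall i, (i < size L)%N -> forall a, A a -> `|(nth d L i).1 a| <= M.
Proof.
move=> bA; elim: L => [|p L IH] /=; first by exists 0.
move=> [lp HL].
have [M1 H1] := bounded_lin bA lp; have [M2 H2] := IH HL.
exists (`|M1| + `|M2|) => -[|i] /= hi a Aa.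
  apply: le_trans (H1 a Aa) _; apply: le_trans (ler_norm M1) _.
  by rewrite lerDl normr_ge0.
apply: le_trans (H2 i hi a Aa) _; apply: le_trans (ler_norm M2) _.
by rewrite lerDr normr_ge0.
Qed.

End Fin.

Unset Implicit Arguments.
Theorem theorem3p16 (R : realType) (X : lmodType R) :
  (forall A : set X, tauc_closed A -> tauc_bounded A -> tauc_compact A) /\
  (forall A : set X, tauc_compact A ->
     exists V : set X, fin_dim_subspace V /\ A `<=` V).
Proof.
split.
- move=> A cA bA.
  have [s As] : exists s, A `<=` span_seq s.
    apply: contrapT => ns.
    have hA : forall s, ~ A `<=` span_seq s by move=> s h; apply: ns; exists s.
    have [f [lf Hf]] := unbounded_fun hA.
    have [M HM] := bounded_lin bA lf.
    have [a Aa fa] := Hf (Num.truncn `|M|).+1.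
    have := HM a Aa; rewrite fa normr_nat.
    have := truncnS_gt `|M|; have := ler_norm M; lra.
  have [L [HL HD]] := decomp s.
  pose d := ((fun _ : X => 0 : R), 0 : X).
  pose L' := d :: L.
  have HL' : AllP (fun p => linf p.1) L'.
    rewrite /L' /=; split; last exact: HL.
    by split => * /=; rewrite ?addr0 ?mulr0.
  have [M HM] := bound_list d bA HL'.
  pose t : 'I_(size L).+1 -> X := fun i => (nth d L' i).2.
  apply: (@compact_box _ _ _ t M) cA _ => a Aa.
  exists (\row_i (nth d L' i).1 a); split.
    by move=> i; rewrite mxE; apply: HM => //; exact: ltn_ord.
  rewrite /phi {1}(HD a (As a Aa)) big_ord_recl !mxE /= scaler0 add0r.
  rewrite (big_nth d) big_mkord; apply: eq_bigr => i _.
  by rewrite mxE /t lift0.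
- move=> A cA.
  case: (pselect (exists s, A `<=` span_seq s)) => [[s As]|ns].
    exists (span_seq s); split => //; split; [exact: tc_span_sub | by exists s].
  exfalso.
  have hA : forall s, ~ A `<=` span_seq s by move=> s h; apply: ns; exists s.
  have [f [lf Hf]] := unbounded_fun hA.
  pose F := [set U : set X | exists n : nat, U = [set x | `|f x| < n%:R]].
  have Fo : forall U, F U -> tauc_open U by move=> U [n ->]; exact: lin_open.
  have AF : A `<=` \bigcup_(U in F) U.
    move=> a Aa; exists [set x | `|f x| < (Num.truncn `|f a|).+1%:R].
      by exists (Num.truncn `|f a|).+1.
    exact: truncnS_gt.
  have [G [GF fG AG]] := cA F Fo AF.
  pose h (U : set X) := xget 0%N (fun n : nat => U = [set x | `|f x| < n%:R]).
  have hU : forall U, G U -> U = [set x | `|f x| < (h U)%:R].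
    by move=> U GU; exact: (xgetPex 0%N (GF U GU)).
  have [B eB] := finite_fsetP.1 (finite_image h fG).
  pose N := (\max_(i <- B) i)%N.
  have [a Aa fa] := Hf N.+1.
  have [U GU Ua] := AG a Aa.
  have hN : (h U <= N)%N.
    have : [set` B] (h U) by rewrite -eB; exists U.
    move=> hB; rewrite /N; apply: (@leq_bigmax_seq _ _ xpredT (fun i => i) (h U)) => //.
  move: Ua; rewrite (hU U GU) /= fa normr_nat ltr_nat => lt.
  by move: (leq_trans lt hN); rewrite ltnNge leqnSn.
Qed.
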